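(* Let $t>0$, $t'\in\{t,t+1\}$ (so $t'\ge t$), $N-t-t'>0$, and assume $\boldsymbol{Q}_{t'}$ and $\boldsymbol{M}_t$ have full column rank. Let $$\boldsymbol{\Gamma}_{t,t'}=\boldsymbol{M}_t^\dagger-\boldsymbol{M}_t^\dagger\boldsymbol{B}_{t'}(\boldsymbol{B}_{t'}^{\mathrm{H}}\boldsymbol{P}^\perp_{\boldsymbol{M}_t}\boldsymbol{B}_{t'})^{-1}\boldsymbol{B}_{t'}^{\mathrm{H}}\boldsymbol{P}^\perp_{\boldsymbol{M}_t},\qquad \boldsymbol{\Delta}_{t,t'}=\boldsymbol{Q}_{t'}^\dagger-\boldsymbol{Q}_{t'}^\dagger\boldsymbol{H}_t(\boldsymbol{H}_t^{\mathrm{H}}\boldsymbol{P}^\perp_{\boldsymbol{Q}_{t'}}\boldsymbol{H}_t)^{-1}\boldsymbol{H}_t^{\mathrm{H}}\boldsymbol{P}^\perp_{\boldsymbol{Q}_{t'}},$$ $\boldsymbol{\epsilon}_{1,t}=\boldsymbol{\Gamma}_{t,t}^{\mathrm{H}}\boldsymbol{H}_t^{\mathrm{H}}\boldsymbol{q}_t^\perp$ and $\boldsymbol{\epsilon}_{2,t}=\boldsymbol{\Delta}_{t,t+1}^{\mathrm{H}}\boldsymbol{B}_{t+1}^{\mathrm{H}}\boldsymbol{m}_t^\perp$. Then for all $\tau<t'$: $\bar{\boldsymbol{V}}_{t,t'}^{\mathrm{H}}\boldsymbol{q}_\tau=\boldsymbol{b}_\tau$; $\bar{\boldsymbol{V}}_{t,t}^{\mathrm{H}}\boldsymbol{q}_t=\boldsymbol{B}_t\boldsymbol{\beta}_t+\boldsymbol{\epsilon}_{1,t}$;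 $\bar{\boldsymbol{V}}_{t,t+1}\boldsymbol{m}_t=\boldsymbol{H}_t\boldsymbol{\alpha}_t+\boldsymbol{\epsilon}_{2,t}$; $$\boldsymbol{\Phi}^\perp_{\boldsymbol{M}_t}\boldsymbol{P}^\perp_{\boldsymbol{V}_{01}^{t,t'}}(\boldsymbol{\Phi}^\perp_{\boldsymbol{M}_t})^{\mathrm{H}}=\boldsymbol{P}^\perp_{\boldsymbol{M}_t}-\boldsymbol{P}^\parallel_{\boldsymbol{P}^\perp_{\boldsymbol{M}_t}\boldsymbol{B}_{t'}},\qquad \boldsymbol{\Phi}^\perp_{\boldsymbol{Q}_{t'}}\boldsymbol{P}^\perp_{\boldsymbol{V}_{10}^{t,t'}}(\boldsymbol{\Phi}^\perp_{\boldsymbol{Q}_{t'}})^{\mathrm{H}}=\boldsymbol{P}^\perp_{\boldsymbol{Q}_{t'}}-\boldsymbol{P}^\parallel_{\boldsymbol{P}^\perp_{\boldsymbol{Q}_{t'}}\boldsymbol{H}_t}.$$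
   Context: Setting: $\boldsymbol{V}$ is an $N\times N$ unitary matrix from the SVD $\boldsymbol{A}=\boldsymbol{U}(\boldsymbol{\Sigma},\boldsymbol{O})\boldsymbol{V}^{\mathrm{H}}$ of the measurement matrix in $\boldsymbol{y}=\boldsymbol{A}\boldsymbol{x}+\boldsymbol{w}$ ($\boldsymbol{A}\in\mathbb{C}^{M\times N}$). Error recursion of the EP algorithm: $\boldsymbol{q}_0=\boldsymbol{x}$; $\boldsymbol{b}_t=\boldsymbol{V}^{\mathrm{H}}\boldsymbol{q}_t$; $\boldsymbol{m}_t=\boldsymbol{b}_t-\gamma_t\tilde{\boldsymbol{W}}_t\{(\boldsymbol{\Sigma},\boldsymbol{O})\boldsymbol{b}_t+\boldsymbol{U}^{\mathrm{H}}\boldsymbol{w}\}$ with $\tilde{\boldsymbol{W}}_t=(\boldsymbol{\Sigma},\boldsymbol{O})^{\mathrm{H}}(\sigma^2\boldsymbol{I}_M+v^t_{\mathrm{B}\to\mathrm{A}}\boldsymbol{\Sigma}^2)^{-1}$; $\boldsymbol{h}_t=\boldsymbol{V}\boldsymbol{m}_t$; $\boldsymbol{q}_{t+1}=\boldsymbol{q}_0-\eta_t(\boldsymbol{q}_0-\boldsymbol{h}_t)$, where $\gamma_t,v^t_{\mathrm{B}\to\mathrm{A}}$ are scalars and $\eta_t$ a scalar function applied componentwise, as produced by the EP algorithm. (In particular $\boldsymbol{B}_{t'}=\boldsymbol{V}^{\mathrm{H}}\boldsymbol{Q}_{t'}$ and $\boldsymbol{H}_t=\boldsymbol{V}\boldsymbol{M}_t$.)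 $\boldsymbol{Q}_t=(\boldsymbol{q}_0,\ldots,\boldsymbol{q}_{t-1})$, similarly $\boldsymbol{B}_t,\boldsymbol{M}_t,\boldsymbol{H}_t\in\mathbb{C}^{N\times t}$. Notation: for full-column-rank $\boldsymbol{X}$, $\boldsymbol{X}^\dagger=(\boldsymbol{X}^{\mathrm{H}}\boldsymbol{X})^{-1}\boldsymbol{X}^{\mathrm{H}}$, $\boldsymbol{P}^\parallel_{\boldsymbol{X}}=\boldsymbol{X}\boldsymbol{X}^\dagger$, $\boldsymbol{P}^\perp_{\boldsymbol{X}}=\boldsymbol{I}-\boldsymbol{P}^\parallel_{\boldsymbol{X}}$; for full-row-rank wide $\boldsymbol{X}$ ($m\times n$, $m\le n$), $\boldsymbol{X}^\dagger=\boldsymbol{X}^{\mathrm{H}}(\boldsymbol{X}\boldsymbol{X}^{\mathrm{H}})^{-1}$, $\boldsymbol{P}^\perp_{\boldsymbol{X}}=\boldsymbol{I}_n-\boldsymbol{X}^\dagger\boldsymbol{X}$. $\boldsymbol{q}_t^\perp=\boldsymbol{P}^\perp_{\boldsymbol{Q}_t}\boldsymbol{q}_t$, $\boldsymbol{\beta}_t=\boldsymbol{Q}_t^\dagger\boldsymbol{q}_t$, $\boldsymbol{m}_t^\perp=\boldsymbol{P}^\perp_{\boldsymbol{M}_t}\boldsymbol{m}_t$, $\boldsymbol{\alpha}_t=\boldsymbol{M}_t^\dagger\boldsymbol{m}_t$. SVD conventions: tall $\boldsymbol{X}\in\mathbb{C}^{m\times n}$ ($m>n$): $\boldsymbol{X}=\boldsymbol{\Phi}_{\boldsymbol{X}}\binom{\boldsymbol{\Sigma}_{\boldsymbol{X}}}{\boldsymbol{O}}\boldsymbol{\Psi}^{\mathrm{H}}_{\boldsymbol{X}}$,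 $\boldsymbol{\Phi}_{\boldsymbol{X}}=(\boldsymbol{\Phi}^\parallel_{\boldsymbol{X}},\boldsymbol{\Phi}^\perp_{\boldsymbol{X}})$ unitary with $\boldsymbol{\Phi}^\parallel_{\boldsymbol{X}}$ the first $n$ columns; wide ($m\le n$): $\boldsymbol{X}=\boldsymbol{\Phi}_{\boldsymbol{X}}(\boldsymbol{\Sigma}_{\boldsymbol{X}},\boldsymbol{O})\boldsymbol{\Psi}^{\mathrm{H}}_{\boldsymbol{X}}$, $\boldsymbol{\Psi}_{\boldsymbol{X}}=(\boldsymbol{\Psi}^\parallel_{\boldsymbol{X}},\boldsymbol{\Psi}^\perp_{\boldsymbol{X}})$ with $\boldsymbol{\Psi}^\parallel_{\boldsymbol{X}}$ the first $m$ columns. Define $\boldsymbol{V}_{00}^{t,t'}=(\boldsymbol{Q}_{t'}^{\dagger}\boldsymbol{\Phi}^{\parallel}_{\boldsymbol{Q}_{t'}})^{\mathrm{H}}\boldsymbol{B}_{t'}^{\mathrm{H}}\boldsymbol{\Phi}^{\parallel}_{\boldsymbol{M}_t}=(\boldsymbol{\Phi}^{\parallel}_{\boldsymbol{Q}_{t'}})^{\mathrm{H}}\boldsymbol{H}_t\boldsymbol{M}_t^{\dagger}\boldsymbol{\Phi}^{\parallel}_{\boldsymbol{M}_t}$, $\boldsymbol{V}_{01}^{t,t'}=(\boldsymbol{Q}_{t'}^{\dagger}\boldsymbol{\Phi}^{\parallel}_{\boldsymbol{Q}_{t'}})^{\mathrm{H}}\boldsymbol{B}_{t'}^{\mathrm{H}}\boldsymbol{\Phi}^{\perp}_{\boldsymbol{M}_t}\in\mathbb{C}^{t'\times(N-t)}$,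 $\boldsymbol{V}_{10}^{t,t'}=(\boldsymbol{\Phi}^{\perp}_{\boldsymbol{Q}_{t'}})^{\mathrm{H}}\boldsymbol{H}_t\boldsymbol{M}_t^{\dagger}\boldsymbol{\Phi}^{\parallel}_{\boldsymbol{M}_t}\in\mathbb{C}^{(N-t')\times t}$, $\bar{\boldsymbol{V}}_{11}^{t,t'}=-\boldsymbol{V}_{10}^{t,t'}[(\boldsymbol{V}_{01}^{t,t'})^\dagger\boldsymbol{V}_{00}^{t,t'}]^{\mathrm{H}}$ and $\bar{\boldsymbol{V}}_{t,t'}=\boldsymbol{\Phi}_{\boldsymbol{Q}_{t'}}\begin{pmatrix}\boldsymbol{V}_{00}^{t,t'}&\boldsymbol{V}_{01}^{t,t'}\\ \boldsymbol{V}_{10}^{t,t'}&\bar{\boldsymbol{V}}_{11}^{t,t'}\end{pmatrix}\boldsymbol{\Phi}_{\boldsymbol{M}_t}^{\mathrm{H}}$. *)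

(* Defs.v *)
From HB Require Import structures.
From mathcomp Require Import all_boot all_order all_algebra.
Set Implicit Arguments. Unset Strict Implicit. Unset Printing Implicit Defensive.
Import Order.TTheory GRing.Theory Num.Theory.
Local Open Scope ring_scope.
Local Open Scope sesquilinear_scope.

Section Defs.
Context {C : numClosedFieldType}.

Definition tpinv {m n} (X : 'M[C]_(m, n)) : 'M[C]_(n, m) :=
  invmx (X ^t* *m X) *m X ^t*.
Definition wpinv {m n} (X : 'M[C]_(m, n)) : 'M[C]_(n, m) :=
  X ^t* *m invmx (X *m X ^t*).
Definition Ppar {m n} (X : 'M[C]_(m, n)) : 'M[C]_m := X *m tpinv X.
Definition Pperp {m n} (X : 'M[C]_(m, n)) : 'M[C]_m := 1%:M - Ppar X.
Definition wPperp {m n} (X : 'M[C]_(m, n)) : 'M[C]_n := 1%:M - wpinv X *m X.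

Definition colmat {N} (k : nat) (f : nat -> 'cV[C]_N) : 'M[C]_(N, k) :=
  \matrix_(i < N, j < k) f j i 0.

Definition sigO {Md N} (s : 'rV[C]_Md) : 'M[C]_(Md, N) :=
  \matrix_(i < Md, j < N) if (i : nat) == j then s 0 i else 0.

Definition meas_svd {Md N} (A : 'M[C]_(Md, N)) (U : 'M[C]_Md) (s : 'rV[C]_Md)
    (V : 'M[C]_N) : Prop :=
  [/\ (Md <= N)%N, U \is unitarymx, V \is unitarymx,
      (forall i, 0 <= s 0 i) & A = U *m sigO s *m V ^t*].

Definition tall_svd {m n} (X : 'M[C]_(m, n)) (Phip : 'M[C]_(m, n))
    (Phio : 'M[C]_(m, m - n)) (s : 'rV[C]_n) (Psi : 'M[C]_n) : Prop :=
  [/\ (n < m)%N,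
      row_mx Phip Phio \is unitarymx /\ (row_mx Phip Phio) ^t* \is unitarymx,
      Psi \is unitarymx,
      (forall i, 0 <= s 0 i) &
      X = row_mx Phip Phio *m col_mx (diag_mx s) 0 *m Psi ^t*].

Definition EP_recursion {Md N} (U : 'M[C]_Md) (s : 'rV[C]_Md) (V : 'M[C]_N)
    (x : 'cV[C]_N) (w : 'cV[C]_Md) (sigma2 : C) (gam vBA : nat -> C)
    (eta : nat -> C -> C) (q m : nat -> 'cV[C]_N) : Prop :=
  let Wt k : 'M[C]_(N, Md) :=
    (sigO s) ^t* *m invmx (sigma2%:M + vBA k *: (diag_mx s) ^+ 2) in
  [/\ q 0%N = x,
      (forall k, m k = V ^t* *m q k
                      - gam k *: (Wt k *m (sigO s *m (V ^t* *m q k) + U ^t* *m w))) &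
      forall k, q k.+1 = q 0%N - map_mx (eta k) (q 0%N - V *m m k)].

(* Gamma_{t,t'} (with X = M_t, Y = B_t') and Delta_{t,t'} (X = Q_t', Y = H_t) *)
Definition Gamma {N k l} (X : 'M[C]_(N, k)) (Y : 'M[C]_(N, l)) : 'M[C]_(k, N) :=
  tpinv X - tpinv X *m Y *m invmx (Y ^t* *m Pperp X *m Y) *m Y ^t* *m Pperp X.
Definition Delta {N k l} (X : 'M[C]_(N, k)) (Y : 'M[C]_(N, l)) : 'M[C]_(k, N) :=
  tpinv X - tpinv X *m Y *m invmx (Y ^t* *m Pperp X *m Y) *m Y ^t* *m Pperp X.

Definition V00 {N t t'} (Q B : 'M[C]_(N, t')) (PQp : 'M[C]_(N, t'))
    (PMp : 'M[C]_(N, t)) : 'M[C]_(t', t) :=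
  (tpinv Q *m PQp) ^t* *m B ^t* *m PMp.
Definition V01 {N t t'} (Q B : 'M[C]_(N, t')) (PQp : 'M[C]_(N, t'))
    (PMo : 'M[C]_(N, N - t)) : 'M[C]_(t', N - t) :=
  (tpinv Q *m PQp) ^t* *m B ^t* *m PMo.
Definition V10 {N t t'} (Mt H : 'M[C]_(N, t)) (PQo : 'M[C]_(N, N - t'))
    (PMp : 'M[C]_(N, t)) : 'M[C]_(N - t', t) :=
  PQo ^t* *m H *m tpinv Mt *m PMp.
Definition V11bar {N t t'} (Q B : 'M[C]_(N, t')) (Mt H : 'M[C]_(N, t))
    (PQp : 'M[C]_(N, t')) (PQo : 'M[C]_(N, N - t'))
    (PMp : 'M[C]_(N, t)) (PMo : 'M[C]_(N, N - t)) : 'M[C]_(N - t', N - t) :=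
  - (V10 Mt H PQo PMp *m (wpinv (V01 Q B PQp PMo) *m V00 Q B PQp PMp) ^t*).
Definition Vbar {N t t'} (Q B : 'M[C]_(N, t')) (Mt H : 'M[C]_(N, t))
    (PQp : 'M[C]_(N, t')) (PQo : 'M[C]_(N, N - t'))
    (PMp : 'M[C]_(N, t)) (PMo : 'M[C]_(N, N - t)) : 'M[C]_N :=
  row_mx PQp PQo *m
    block_mx (V00 Q B PQp PMp) (V01 Q B PQp PMo)
             (V10 Mt H PQo PMp) (V11bar Q B Mt H PQp PQo PMp PMo)
  *m (row_mx PMp PMo) ^t*.

End Defs.

(* Main.v *)
Require Import Defs.
From HB Require Import structures.
From mathcomp Require Import all_boot all_order all_algebra.
Import Order.TTheory GRing.Theory Num.Theory.
Local Open Scope ring_scope.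
Local Open Scope sesquilinear_scope.

Lemma adjM {C : numClosedFieldType} m n p (A : 'M[C]_(m, n)) (B : 'M[C]_(n, p)) :
  (A *m B)^t* = B^t* *m A^t*.
Proof. by rewrite trmx_mul map_mxM. Qed.
Lemma adjD {C : numClosedFieldType} m n (A B : 'M[C]_(m, n)) : (A + B)^t* = A^t* + B^t*.
Proof. by rewrite linearD map_mxD. Qed.
Lemma adjN {C : numClosedFieldType} m n (A : 'M[C]_(m, n)) : (- A)^t* = - A^t*.
Proof. by rewrite linearN map_mxN. Qed.
Lemma adjB {C : numClosedFieldType} m n (A B : 'M[C]_(m, n)) : (A - B)^t* = A^t* - B^t*.
Proof. by rewrite adjD adjN. Qed.
Lemma adj1 {C : numClosedFieldType} n : (1%:M : 'M[C]_n)^t* = 1%:M.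
Proof. by rewrite tr_scalar_mx map_scalar_mx rmorph1. Qed.
Lemma adj0 {C : numClosedFieldType} m n : (0 : 'M[C]_(m,n))^t* = 0.
Proof. by rewrite trmx0 map_mx0. Qed.
Lemma adjK {C : numClosedFieldType} m n (A : 'M[C]_(m, n)) : A^t* ^t* = A.
Proof. exact: trmxCK. Qed.
Lemma adj_inv {C : numClosedFieldType} n (A : 'M[C]_n) : (invmx A)^t* = invmx (A^t*).
Proof. by rewrite trmx_inv map_invmx. Qed.
Lemma adj_unit {C : numClosedFieldType} n (A : 'M[C]_n) : (A^t* \in unitmx) = (A \in unitmx).
Proof. by rewrite map_unitmx unitmx_tr. Qed.
Lemma adj_row {C : numClosedFieldType} m n1 n2 (A : 'M[C]_(m, n1)) (B : 'M[C]_(m, n2)) :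
  (row_mx A B)^t* = col_mx (A^t*) (B^t*).
Proof. by rewrite tr_row_mx map_col_mx. Qed.
Lemma invmxM' {C : numClosedFieldType} n (A B : 'M[C]_n) :
  A \in unitmx -> B \in unitmx -> invmx (A *m B) = invmx B *m invmx A.
Proof.
move=> uA uB.
have uAB : A *m B \in unitmx by rewrite unitmx_mul uA uB.
have h : A *m B *m (invmx B *m invmx A) = 1%:M.
  by rewrite mulmxA -(mulmxA A) mulmxV // mulmx1 mulmxV.
by rewrite -[invmx (A *m B)]mulmx1 -h mulmxA mulVmx // mul1mx.
Qed.
Lemma unit_gram {C : numClosedFieldType} N k (Z : 'M[C]_(N, k)) :
  \rank Z = k -> Z^t* *m Z \in unitmx.
Proof.
move=> rZ.
rewrite -row_free_unit -kermx_eq0; apply/eqP/row_matrixP => i; rewrite row0.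
set u := row i _.
have h : u *m (Z^t* *m Z) = 0 by rewrite /u -row_mul mulmx_ker row0.
set y := u *m Z^t*.
have hy : y *m y^t* = 0.
  by rewrite /y trmx_mul map_mxM trmxCK mulmxA -(mulmxA u) h mul0mx.
have y0 : y = 0.
  have := dnorm_eq0 (@dotmx C N) y.
  have -> : (@dotmx C N : {dot _ for Num.Def.conjC}) y y = dotmx y y by [].
  by rewrite dotmxE hy mxE eqxx => /esym/eqP.
have fr : row_free (Z^t*) by rewrite /row_free mxrank_map mxrank_tr rZ.
by apply: (row_free_inj fr); rewrite mul0mx.
Qed.

Lemma tall_svdE {C : numClosedFieldType} m n (X : 'M[C]_(m, n)) Pp Po s Psi :
  tall_svd X Pp Po s Psi ->
  [/\ Pp^t* *m Pp = 1%:M, Po^t* *m Po = 1%:M, Pp^t* *m Po = 0, Po^t* *m Pp = 0 &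
   Pp *m Pp^t* + Po *m Po^t* = 1%:M] /\ X = Pp *m (diag_mx s *m Psi^t*).
Proof.
case=> _ [/unitarymxP u1 /unitarymxP u2] _ _ ->.
move: u1; rewrite adj_row mul_row_col => u1.
move: u2; rewrite adjK adj_row mul_col_row (scalar_mx_block n (m - n)).
case/eq_block_mx => a b c d.
split; first by split.
by rewrite mul_row_col mulmx0 addr0 mulmxA.
Qed.

Lemma unit_of_rank {C : numClosedFieldType} m n (P : 'M[C]_(m, n)) (D : 'M[C]_n) :
  \rank (P *m D) = n -> D \in unitmx.
Proof.
move=> r; rewrite -row_free_unit /row_free eqn_leq rank_leq_col /=.
by rewrite -{1}r mxrankM_maxr.
Qed.

Lemma tpinvE {C : numClosedFieldType} m n (X : 'M[C]_(m, n)) :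
  tpinv X = invmx (X^t* *m X) *m X^t*.
Proof. by []. Qed.
Lemma wpinvE {C : numClosedFieldType} m n (X : 'M[C]_(m, n)) :
  wpinv X = X^t* *m invmx (X *m X^t*).
Proof. by []. Qed.
Lemma PparE {C : numClosedFieldType} m n (X : 'M[C]_(m, n)) : Ppar X = X *m tpinv X.
Proof. by []. Qed.
Lemma PperpE {C : numClosedFieldType} m n (X : 'M[C]_(m, n)) : Pperp X = 1%:M - Ppar X.
Proof. by []. Qed.
Lemma wPperpE {C : numClosedFieldType} m n (X : 'M[C]_(m, n)) :
  wPperp X = 1%:M - wpinv X *m X.
Proof. by []. Qed.
Lemma GammaE {C : numClosedFieldType} N k l (X : 'M[C]_(N, k)) (Y : 'M[C]_(N, l)) :
  Gamma X Y = tpinv X - tpinv X *m Y *m invmx (Y^t* *m Pperp X *m Y) *m Y^t* *m Pperp X.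
Proof. by []. Qed.
Lemma DeltaE {C : numClosedFieldType} N k l (X : 'M[C]_(N, k)) (Y : 'M[C]_(N, l)) :
  Delta X Y = tpinv X - tpinv X *m Y *m invmx (Y^t* *m Pperp X *m Y) *m Y^t* *m Pperp X.
Proof. by []. Qed.
Lemma V00E {C : numClosedFieldType} N t t' (Q B : 'M[C]_(N, t')) PQp (PMp : 'M[C]_(N, t)) :
  V00 Q B PQp PMp = (tpinv Q *m PQp)^t* *m B^t* *m PMp.
Proof. by []. Qed.
Lemma V01E {C : numClosedFieldType} N t t' (Q B : 'M[C]_(N, t')) PQp (PMo : 'M[C]_(N, N - t)) :
  V01 Q B PQp PMo = (tpinv Q *m PQp)^t* *m B^t* *m PMo.
Proof. by []. Qed.
Lemma V10E {C : numClosedFieldType} N t t' (Mt H : 'M[C]_(N, t)) (PQo : 'M[C]_(N, N - t')) PMp :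
  V10 Mt H PQo PMp = PQo^t* *m H *m tpinv Mt *m PMp.
Proof. by []. Qed.
Lemma V11barE {C : numClosedFieldType} N t t' (Q B : 'M[C]_(N, t')) (Mt H : 'M[C]_(N, t))
    PQp PQo PMp PMo :
  V11bar Q B Mt H PQp PQo PMp PMo =
  - (V10 Mt H PQo PMp *m (wpinv (V01 Q B PQp PMo) *m V00 Q B PQp PMp)^t*).
Proof. by []. Qed.
Lemma VbarE {C : numClosedFieldType} N t t' (Q B : 'M[C]_(N, t')) (Mt H : 'M[C]_(N, t))
    PQp PQo PMp PMo :
  Vbar Q B Mt H PQp PQo PMp PMo =
  row_mx PQp PQo *m
    block_mx (V00 Q B PQp PMp) (V01 Q B PQp PMo)
             (V10 Mt H PQo PMp) (V11bar Q B Mt H PQp PQo PMp PMo)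
  *m (row_mx PMp PMo) ^t*.
Proof. by []. Qed.

Lemma canL {C : numClosedFieldType} {n k} {A : 'M[C]_(n, k)} {B : 'M[C]_(k, n)} :
  A *m B = 1%:M -> forall p (X : 'M[C]_(p, n)), X *m A *m B = X.
Proof. by move=> h p X; rewrite -mulmxA h mulmx1. Qed.
Lemma zeroL {C : numClosedFieldType} {n k l} {A : 'M[C]_(n, k)} {B : 'M[C]_(k, l)} :
  A *m B = 0 -> forall p (X : 'M[C]_(p, n)), X *m A *m B = 0.
Proof. by move=> h p X; rewrite -mulmxA h mulmx0. Qed.

Lemma sandwich {C : numClosedFieldType} n (D S : 'M[C]_n) :
  D \in unitmx -> S \in unitmx ->
  D *m invmx (D^t* *m S *m D) *m D^t* = invmx S.
Proof.
move=> uD uS.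
have uDt : D^t* \in unitmx by rewrite adj_unit.
rewrite invmxM' ?unitmx_mul ?uDt ?uS // invmxM' //.
by rewrite ?mulmxA mulmxV // mul1mx -mulmxA mulVmx // mulmx1.
Qed.

Lemma tpinv_svd {C : numClosedFieldType} N k (P : 'M[C]_(N, k)) (D : 'M[C]_k) :
  P^t* *m P = 1%:M -> D \in unitmx -> tpinv (P *m D) = invmx D *m P^t*.
Proof.
move=> hP uD; rewrite /tpinv adjM.
have -> : D^t* *m P^t* *m (P *m D) = D^t* *m D.
  by rewrite mulmxA -(mulmxA _ _ P) hP mulmx1.
rewrite invmxM' ?adj_unit // ?mulmxA -(mulmxA _ _ (D^t*)) mulVmx ?adj_unit //.
by rewrite mulmx1.
Qed.

Lemma Pperp_svd {C : numClosedFieldType} {N k} {P1 : 'M[C]_(N, k)} {P2 : 'M[C]_(N, N - k)}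
  {D : 'M[C]_k} :
  P1^t* *m P1 = 1%:M -> P1 *m P1^t* + P2 *m P2^t* = 1%:M -> D \in unitmx ->
  Pperp (P1 *m D) = P2 *m P2^t*.
Proof.
move=> h1 hS uD; rewrite /Pperp /Ppar tpinv_svd //.
rewrite -mulmxA (mulmxA D) mulmxV // mul1mx -hS.
by rewrite (addrC (P1 *m _)) addrK.
Qed.

Lemma Ppar_red {C : numClosedFieldType} N k l (P : 'M[C]_(N, k)) (Y : 'M[C]_(k, l))
  (D : 'M[C]_l) :
  P^t* *m P = 1%:M -> D \in unitmx -> Y^t* *m Y \in unitmx ->
  Ppar (P *m Y *m D) = P *m Y *m invmx (Y^t* *m Y) *m Y^t* *m P^t*.
Proof.
move=> hP uD uY; rewrite /Ppar /tpinv.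
have -> : (P *m Y *m D)^t* *m (P *m Y *m D) = D^t* *m (Y^t* *m Y) *m D.
  by rewrite !adjM ?mulmxA (canL hP).
rewrite !adjM ?mulmxA -!(mulmxA (P *m Y)).
idtac.
by rewrite -[D^t* *m Y^t* *m Y]mulmxA sandwich // ?mulmxA.
Qed.

Lemma split_left {C : numClosedFieldType} {N k1 k2 p} {R1 : 'M[C]_(N, k1)} {R2 : 'M[C]_(N, k2)}
  {L L' : 'M[C]_(N, p)} :
  R1 *m R1^t* + R2 *m R2^t* = 1%:M ->
  R1^t* *m L = R1^t* *m L' -> R2^t* *m L = R2^t* *m L' -> L = L'.
Proof.
move=> hS h1 h2.
by rewrite -(mul1mx L) -(mul1mx L') -hS !mulmxDl -?mulmxA h1 h2.
Qed.

Lemma sandwichL {C : numClosedFieldType} n p (D S : 'M[C]_n) (X : 'M[C]_(p, n)) :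
  D \in unitmx -> S \in unitmx ->
  X *m D *m invmx (D^t* *m S *m D) *m D^t* = X *m invmx S.
Proof. by move=> uD uS; rewrite -(mulmxA X D) -(mulmxA X) sandwich. Qed.

Lemma core {C : numClosedFieldType} N a c (V : 'M[C]_N) (P1 : 'M[C]_(N, a))
  (P2 : 'M[C]_(N, N - a)) (D : 'M[C]_a) (R1 : 'M[C]_(N, c)) (R2 : 'M[C]_(N, N - c))
  (E : 'M[C]_c) :
  V *m V^t* = 1%:M -> V^t* *m V = 1%:M ->
  [/\ P1^t* *m P1 = 1%:M, P2^t* *m P2 = 1%:M, P1^t* *m P2 = 0, P2^t* *m P1 = 0 &
   P1 *m P1^t* + P2 *m P2^t* = 1%:M] ->
  [/\ R1^t* *m R1 = 1%:M, R2^t* *m R2 = 1%:M, R1^t* *m R2 = 0, R2^t* *m R1 = 0 &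
   R1 *m R1^t* + R2 *m R2^t* = 1%:M] ->
  D \in unitmx -> E \in unitmx ->
  let Q := P1 *m D in let M := R1 *m E in
  let B := V^t* *m Q in let H := V *m M in
  (Pperp M *m B)^t* *m (Pperp M *m B) \in unitmx ->
  (Pperp Q *m H)^t* *m (Pperp Q *m H) \in unitmx ->
  let Vb := Vbar Q B M H P1 P2 R1 R2 in
  [/\ Vb^t* *m Q = B, Vb^t* *m P2 = (Gamma M B)^t* *m H^t* *m P2, Vb *m M = H &
      Vb *m R2 = (Delta Q H)^t* *m B^t* *m R2] /\
     (R2 *m wPperp (V01 Q B P1 R2) *m R2^t* = Pperp M - Ppar (Pperp M *m B) /\
      P2 *m Pperp (V10 M H P2 R1) *m P2^t* = Pperp Q - Ppar (Pperp Q *m H)).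
Proof.
move=> hV1 hV2 [p11 p22 p12 p21 pS] [r11 r22 r12 r21 rS] uD uE Q M B H gB gH Vb.
have tpQ : tpinv Q = invmx D *m P1^t* by rewrite /Q tpinv_svd.
have tpM : tpinv M = invmx E *m R1^t* by rewrite /M tpinv_svd.
have ppQ : Pperp Q = P2 *m P2^t* by rewrite /Q (Pperp_svd p11 pS).
have ppM : Pperp M = R2 *m R2^t* by rewrite /M (Pperp_svd r11 rS).
have [W00 eW00] : exists W, P1^t* *m V *m R1 = W by eexists.
have [W01 eW01] : exists W, P1^t* *m V *m R2 = W by eexists.
have [W10 eW10] : exists W, P2^t* *m V *m R1 = W by eexists.
have [W11 eW11] : exists W, P2^t* *m V *m R2 = W by eexists.
have kD : (invmx D)^t* *m D^t* = 1%:M by rewrite -adjM mulmxV // adj1.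
have kE : E *m invmx E = 1%:M by rewrite mulmxV.
have e00 : V00 Q B P1 R1 = W00.
  by rewrite V00E tpQ -(mulmxA (invmx D)) p11 mulmx1 /B /Q !adjM adjK ?mulmxA kD mul1mx.
have e01 : V01 Q B P1 R2 = W01.
  by rewrite V01E tpQ -(mulmxA (invmx D)) p11 mulmx1 /B /Q !adjM adjK ?mulmxA kD mul1mx.
have e10 : V10 M H P2 R1 = W10.
  by rewrite V10E tpM /H /M ?mulmxA (canL r11) (canL kE).
set X := - (W10 *m (wpinv W01 *m W00)^t*).
have eX : V11bar Q B M H P1 P2 R1 R2 = X by rewrite V11barE e00 e01 e10.
have VbR1 : Vb *m R1 = V *m R1.
  rewrite /Vb VbarE eX e00 e01 e10 adj_row -mulmxA mul_col_mx r11 r21.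
  rewrite -mulmxA mul_block_col !mulmx1 !mulmx0 !addr0 mul_row_col.
  by rewrite -[V *m R1]mul1mx -pS mulmxDl -?mulmxA !(mulmxA _ V) eW00 eW10.
have VbR2 : Vb *m R2 = P1 *m W01 + P2 *m X.
  rewrite /Vb VbarE eX e00 e01 e10 adj_row -mulmxA mul_col_mx r12 r22.
  by rewrite -mulmxA mul_block_col !mulmx1 !mulmx0 !add0r mul_row_col.
have [S eS] : exists S, W01 *m W01^t* = S by eexists.
have [T eT] : exists T, W10^t* *m W10 = T by eexists.
have hS : S^t* = S by rewrite -eS adjM adjK.
have hT : T^t* = T by rewrite -eT adjM adjK.
have eG : (Pperp M *m B)^t* *m (Pperp M *m B) = D^t* *m S *m D.
  by rewrite ppM /B /Q -eS -eW01 !adjM !adjK ?mulmxA (canL r22).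
have eG' : B^t* *m (R2 *m R2^t*) *m B = D^t* *m S *m D.
  by rewrite /B /Q -eS -eW01 !adjM !adjK ?mulmxA.
have eH : (Pperp Q *m H)^t* *m (Pperp Q *m H) = E^t* *m T *m E.
  by rewrite ppQ /H /M -eT -eW10 !adjM !adjK ?mulmxA (canL p22).
have eH' : H^t* *m (P2 *m P2^t*) *m H = E^t* *m T *m E.
  by rewrite /H /M -eT -eW10 !adjM !adjK ?mulmxA.
have uS : S \in unitmx.
  by move: gB; rewrite eG !unitmx_mul => /andP[/andP[]].
have uT : T \in unitmx.
  by move: gH; rewrite eH !unitmx_mul => /andP[/andP[]].
have aS : (invmx S)^t* = invmx S by rewrite adj_inv hS.
have aT : (invmx T)^t* = invmx T by rewrite adj_inv hT.
have u0 : W00^t* *m W00 + T = 1%:M.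
  have h : R1^t* *m V^t* *m (P1 *m P1^t* + P2 *m P2^t*) *m V *m R1 = 1%:M.
    by rewrite pS mulmx1 (canL hV2) r11.
  by rewrite -h -eT -eW00 -eW10 mulmxDr !mulmxDl !adjM !adjK ?mulmxA.
have u1 : W00 *m W00^t* + S = 1%:M.
  have h : P1^t* *m V *m (R1 *m R1^t* + R2 *m R2^t*) *m V^t* *m P1 = 1%:M.
    by rewrite rS mulmx1 (canL hV1) p11.
  by rewrite -h -eS -eW00 -eW01 mulmxDr !mulmxDl !adjM !adjK ?mulmxA.
have TW : T *m W00^t* = W00^t* *m S.
  have eT' : T = 1%:M - W00^t* *m W00 by rewrite -u0 addrC addKr.
  have eS' : S = 1%:M - W00 *m W00^t* by rewrite -u1 addrC addKr.
  by rewrite eT' eS' mulmxBl mulmxBr mul1mx mulmx1 mulmxA.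
have iTW : W00^t* *m invmx S = invmx T *m W00^t*.
  have := congr1 (fun Z => invmx T *m Z *m invmx S) TW.
  by rewrite /= mulmxA mulVmx // mul1mx -?mulmxA mulmxV // mulmx1.
split; [split|split].
- apply: (split_left rS).
    by rewrite mulmxA -adjM VbR1 adjM /B mulmxA.
  rewrite mulmxA -adjM VbR2 adjD !adjM /B /Q mulmxDl ?mulmxA (canL p11).
  by rewrite (zeroL p21) mul0mx addr0 -eW01 !adjM adjK ?mulmxA.
- apply: (split_left rS).
    have hGR1 : H *m Gamma M B *m R1 = V *m R1.
      rewrite GammaE tpM ppM eG' mulmxBr mulmxBl ?mulmxA (canL r11) (zeroL r21).
      by rewrite subr0 /H /M ?mulmxA (canL kE).
    have -> : R1^t* *m ((Gamma M B)^t* *m H^t* *m P2) = (V *m R1)^t* *m P2.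
      by rewrite -hGR1 !adjM ?mulmxA.
    by rewrite mulmxA -adjM VbR1.
  have hGR2 : H *m Gamma M B *m R2 = - (V *m R1 *m W00^t* *m invmx S *m W01).
    rewrite GammaE tpM ppM eG' mulmxBr mulmxBl ?mulmxA (zeroL r12) (canL r22).
    rewrite sub0r /H /M /B /Q !adjM adjK ?mulmxA (canL kE) sandwichL //.
    by rewrite -eW00 -eW01 !adjM adjK ?mulmxA.
  have -> : R2^t* *m ((Gamma M B)^t* *m H^t* *m P2) =
            (- (V *m R1 *m W00^t* *m invmx S *m W01))^t* *m P2.
    by rewrite -hGR2 !adjM ?mulmxA.
  rewrite mulmxA -adjM VbR2 adjD !adjM mulmxDl ?mulmxA (zeroL p12) (canL p22) add0r.
  rewrite /X wpinvE eS !adjN !adjM !adjK aS -eW10 !adjM adjK.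
  by rewrite !mulNmx ?mulmxA.
- by rewrite /M mulmxA VbR1 /H mulmxA.
- have kD' : D *m invmx D = 1%:M by rewrite mulmxV.
  have hDP1 : B *m Delta Q H *m P1 = V^t* *m P1.
    rewrite DeltaE tpQ ppQ eH' mulmxBr mulmxBl ?mulmxA (canL p11) (zeroL p21).
    by rewrite subr0 /B /Q ?mulmxA (canL kD').
  have hDP2 : B *m Delta Q H *m P2 = - (V^t* *m P1 *m W00 *m invmx T *m W10^t*).
    rewrite DeltaE tpQ ppQ eH' mulmxBr mulmxBl ?mulmxA (zeroL p12) (canL p22).
    rewrite sub0r /B /Q /H /M !adjM ?adjK ?mulmxA (canL kD') sandwichL //.
    by rewrite -eW00 -eW10 !adjM adjK ?mulmxA.
  have iTWL : forall p (Y : 'M_(p, _)), Y *m W00^t* *m invmx S = Y *m invmx T *m W00^t*.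
    by move=> p Y; rewrite -?mulmxA iTW.
  apply: (split_left pS).
    rewrite VbR2 mulmxDr ?mulmxA p11 p12 mul1mx mul0mx addr0.
    have -> : P1^t* *m (Delta Q H)^t* *m B^t* = (B *m Delta Q H *m P1)^t*.
      by rewrite !adjM ?mulmxA.
    by rewrite hDP1 -eW01 !adjM adjK ?mulmxA.
  rewrite VbR2 mulmxDr ?mulmxA p21 p22 mul1mx mul0mx add0r.
  have -> : P2^t* *m (Delta Q H)^t* *m B^t* = (B *m Delta Q H *m P2)^t*.
    by rewrite !adjM ?mulmxA.
  rewrite hDP2 /X wpinvE eS !adjN !adjM !adjK aS aT ?mulmxA iTWL.
  by rewrite -eW01 !mulNmx ?mulmxA.
- have eZ : R2 *m R2^t* *m B = R2 *m W01^t* *m D.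
    by rewrite /B /Q -eW01 !adjM adjK ?mulmxA.
  rewrite ppM eZ Ppar_red ?adjK ?eS // e01 wPperpE wpinvE eS.
  by rewrite mulmxBr mulmxBl mulmx1 ?mulmxA.
- have eZ : P2 *m P2^t* *m H = P2 *m W10 *m E.
    by rewrite /H /M -eW10 ?mulmxA.
  rewrite ppQ eZ Ppar_red ?eT // e10 PperpE PparE tpinvE eT.
  by rewrite mulmxBr mulmxBl mulmx1 ?mulmxA.
Qed.

Lemma core2 {C : numClosedFieldType} N a c (V : 'M[C]_N) (P1 : 'M[C]_(N, a))
  (P2 : 'M[C]_(N, N - a)) (D : 'M[C]_a) (R1 : 'M[C]_(N, c)) (R2 : 'M[C]_(N, N - c))
  (E : 'M[C]_c) (Q B : 'M[C]_(N, a)) (M H : 'M[C]_(N, c)) (Vb : 'M[C]_N) :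
  V *m V^t* = 1%:M -> V^t* *m V = 1%:M ->
  [/\ P1^t* *m P1 = 1%:M, P2^t* *m P2 = 1%:M, P1^t* *m P2 = 0, P2^t* *m P1 = 0 &
   P1 *m P1^t* + P2 *m P2^t* = 1%:M] ->
  [/\ R1^t* *m R1 = 1%:M, R2^t* *m R2 = 1%:M, R1^t* *m R2 = 0, R2^t* *m R1 = 0 &
   R1 *m R1^t* + R2 *m R2^t* = 1%:M] ->
  D \in unitmx -> E \in unitmx ->
  Q = P1 *m D -> M = R1 *m E -> B = V^t* *m Q -> H = V *m M ->
  (Pperp M *m B)^t* *m (Pperp M *m B) \in unitmx ->
  (Pperp Q *m H)^t* *m (Pperp Q *m H) \in unitmx ->
  Vb = Vbar Q B M H P1 P2 R1 R2 ->
  [/\ Vb^t* *m Q = B, Vb^t* *m P2 = (Gamma M B)^t* *m H^t* *m P2, Vb *m M = H &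
      Vb *m R2 = (Delta Q H)^t* *m B^t* *m R2] /\
     (R2 *m wPperp (V01 Q B P1 R2) *m R2^t* = Pperp M - Ppar (Pperp M *m B) /\
      P2 *m Pperp (V10 M H P2 R1) *m P2^t* = Pperp Q - Ppar (Pperp Q *m H)).
Proof.
move=> hV1 hV2 hP hR uD uE -> -> -> -> gB gH ->.
exact (@core _ N a c V P1 P2 D R1 R2 E hV1 hV2 hP hR uD uE gB gH).
Qed.

Lemma colmatM {C : numClosedFieldType} N p k (A : 'M[C]_(p, N)) (f : nat -> 'cV[C]_N) :
  colmat k (fun j => A *m f j) = A *m colmat k f.
Proof.
apply/matrixP => i j; rewrite !mxE; apply: eq_bigr => l _; rewrite !mxE //.
Qed.

Lemma colmat_col {C : numClosedFieldType} {N k} {f : nat -> 'cV[C]_N} {tau} (lt : (tau < k)%N) :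
  f tau = colmat k f *m delta_mx (Ordinal lt) 0.
Proof.
rewrite -colE; apply/matrixP => i j; rewrite !mxE (ord1 j) //.
Qed.

Arguments tall_svdE {C m n X Pp Po s Psi}.
Arguments unit_gram {C N k Z}.
Arguments core2 {C N a c V P1 P2 D R1 R2 E Q B M H Vb}.

Theorem lemma4 (C : numClosedFieldType) (Md N : nat)
  (A : 'M[C]_(Md, N)) (U : 'M[C]_Md) (s : 'rV[C]_Md) (V : 'M[C]_N)
  (x : 'cV[C]_N) (w : 'cV[C]_Md) (sigma2 : C) (gam vBA : nat -> C)
  (eta : nat -> C -> C) (q m : nat -> 'cV[C]_N)
  (t t' : nat)
  (PQp : 'M[C]_(N, t')) (PQo : 'M[C]_(N, N - t')) (sQ : 'rV[C]_t') (PsiQ : 'M[C]_t')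
  (PMp : 'M[C]_(N, t)) (PMo : 'M[C]_(N, N - t)) (sM : 'rV[C]_t) (PsiM : 'M[C]_t) :
  let b k := V ^t* *m q k in
  let h k := V *m m k in
  let Qs k := colmat k q in
  let Bs k := colmat k b in
  let Ms k := colmat k m in
  let Hs k := colmat k h in
  meas_svd A U s V ->
  EP_recursion U s V x w sigma2 gam vBA eta q m ->
  (0 < t)%N -> (t' = t \/ t' = t.+1) -> (t + t' < N)%N ->
  \rank (Qs t') = t' -> \rank (Ms t) = t ->
  (* full column rank of the matrices whose P^par appears below *)
  \rank (Pperp (Ms t) *m Bs t') = t' -> \rank (Pperp (Qs t') *m Hs t) = t ->
  tall_svd (Qs t') PQp PQo sQ PsiQ -> tall_svd (Ms t) PMp PMo sM PsiM ->
  let Vb := Vbar (Qs t') (Bs t') (Ms t) (Hs t) PQp PQo PMp PMo in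
  let beta := tpinv (Qs t) *m q t in
  let alpha := tpinv (Ms t) *m m t in
  let qperp := Pperp (Qs t) *m q t in
  let mperp := Pperp (Ms t) *m m t in
  let eps1 := (Gamma (Ms t) (Bs t)) ^t* *m (Hs t) ^t* *m qperp in
  let eps2 := (Delta (Qs t.+1) (Hs t)) ^t* *m (Bs t.+1) ^t* *m mperp in
  [/\ forall tau, (tau < t')%N -> Vb ^t* *m q tau = b tau,
      t' = t -> Vb ^t* *m q t = Bs t *m beta + eps1,
      t' = t.+1 -> Vb *m m t = Hs t *m alpha + eps2,
      PMo *m wPperp (V01 (Qs t') (Bs t') PQp PMo) *m PMo ^t*
        = Pperp (Ms t) - Ppar (Pperp (Ms t) *m Bs t') &
      PQo *m Pperp (V10 (Ms t) (Hs t) PQo PMp) *m PQo ^t*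
        = Pperp (Qs t') - Ppar (Pperp (Qs t') *m Hs t)].
Proof.
move=> b h Qs Bs Ms Hs [_ _ uV _ _] _ _ _ _ rQ rM rPB rPH svQ svM.
move=> Vb beta alpha qperp mperp eps1 eps2.
have hV1 : V *m V^t* = 1%:M by apply/unitarymxP.
have hV2 : V^t* *m V = 1%:M.
  by move: uV; rewrite -trmxC_unitary => /unitarymxP; rewrite adjK.
case: (tall_svdE svQ) => pQ eQ; case: (tall_svdE svM) => pM eM.
have uD : (diag_mx sQ *m PsiQ^t*) \in unitmx.
  by apply: (@unit_of_rank _ _ _ PQp); rewrite -eQ.
have uE : (diag_mx sM *m PsiM^t*) \in unitmx.
  by apply: (@unit_of_rank _ _ _ PMp); rewrite -eM.
have eB : forall k, Bs k = V^t* *m Qs k by move=> k; apply: colmatM.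
have eH : forall k, Hs k = V *m Ms k by move=> k; apply: colmatM.
have gB := unit_gram rPB.
have gH := unit_gram rPH.
have [[KA KB KC KD] [KE KF]] :=
  core2 hV1 hV2 pQ pM uD uE eQ eM (eB t') (eH t) gB gH (erefl Vb).
have ppQ : Pperp (Qs t') = PQo *m PQo^t*.
  by case: pQ => p11 _ _ _ pS; rewrite eQ (Pperp_svd p11 pS).
have ppM : Pperp (Ms t) = PMo *m PMo^t*.
  by case: pM => p11 _ _ _ pS; rewrite eM (Pperp_svd p11 pS).
split => //.
- move=> tau ltau.
  by rewrite /b (colmat_col ltau) ?mulmxA KA eB ?mulmxA.
- move=> ett; subst t'.
  have eq : q t = Qs t *m beta + qperp.
    by rewrite /qperp /beta PperpE PparE mulmxBl mul1mx ?mulmxA addrC subrK.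
  rewrite {1}eq mulmxDr mulmxA KA; congr (_ + _).
  by rewrite /eps1 /qperp ppQ ?mulmxA KB.
- move=> ett; subst t'.
  have eq : m t = Ms t *m alpha + mperp.
    by rewrite /mperp /alpha PperpE PparE mulmxBl mul1mx ?mulmxA addrC subrK.
  rewrite {1}eq mulmxDr mulmxA KC; congr (_ + _).
  by rewrite /eps2 /mperp ppM ?mulmxA KD.
Qed.
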